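(* Let $N=2$, $J=1$, $h_0=[0,1]^{\sf T}$, $h_1=[\cos\tau,z]^{\sf T}$ with $z=\sin\tau\,e^{i\phi_z}$, $\tau\in[0,\pi/2)$, $\phi_z\in[0,2\pi)$, $\sigma_0^2,\sigma_1^2,\sigma_n^2>0$, and $c_1=|c_1|e^{i\phi_c}$ with $|c_1|\le\sigma_0\sigma_1$, $\phi_c\in[0,2\pi)$. Then for every $\lambda\ge0$, \[ w_{\rm RZF}(\lambda)=\begin{bmatrix}-\dfrac{\cos\tau\,[(\sigma_1^2+\lambda)z^*+c_1]}{(\sigma_1^2+\lambda)\cos^2\tau+\sigma_n^2}\\[2mm] 1\end{bmatrix}, \] and \[ \mathrm{MSE}(\lambda)=\frac{|\delta_2|^2(\sigma_1^2\cos^2\tau+\sigma_n^2)}{g(\lambda)^2}-\frac{2\sigma_n^2\delta_1\tan\tau}{g(\lambda)}+\sigma_n^2(\tan^2\tau+1), \] with $g(\lambda):=\lambda\cos^2\tau+\sigma_1^2\cos^2\tau+\sigma_n^2$, $\delta_1:=\sigma_n^2\tan\tau-|c_1|\cos\tau\cos(\phi_c+\phi_z)$, $\delta_2:=\sigma_n^2\tan\tau-|c_1|\cos\tau\,e^{i(\phi_c+\phi_z)}$. Furthermore: (i) if $\delta_2=0$ (which implies $\delta_1=0$), $\mathrm{MSE}(\lambda)=\sigma_n^2(\tan^2\tau+1)$ for all $\lambda\ge0$; (ii) if $\delta_2\ne0$, let $\gamma:=\delta_1\sigma_n^2\tan\tau/|\delta_2|^2$: (a) if $\gamma\le0$ (equivalently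 $\delta_1\tan\tau\le0$), $\mathrm{MSE}(\lambda)$ is decreasing on $[0,\infty)$ and its infimum is $\lim_{\lambda\to\infty}\mathrm{MSE}(\lambda)$ (ZF optimal); (b) if $\gamma\ge1$, $\mathrm{MSE}(\lambda)$ is increasing and is minimized at $\lambda=0$; (c) if $\gamma\in(0,1)$, $\mathrm{MSE}$ is minimized over $[0,\infty)$ by $\lambda=\dfrac{\sigma_1^2\cos^2\tau+\sigma_n^2}{\cos^2\tau}\cdot\dfrac{1-\gamma}{\gamma}>0$.
   Context: Complex single-interference model: $y(k)=s_0(k)h_0+s_1(k)h_1+n(k)\in\mathbb{C}^N$, with zero-mean jointly weakly stationary complex signals $s_0,s_1$, $\sigma_j^2:=E|s_j(k)|^2$, $c_1:=E[s_0^*(k)s_1(k)]$, and noise $n(k)\sim\mathcal{CN}(0,\sigma_n^2I)$ uncorrelated with the signals. $R:=E[y(k)y(k)^{\sf H}]$. For $\lambda\ge0$, $R_\lambda:=R+\lambda h_1h_1^{\sf H}$ and the RZF beamformer is $w_{\rm RZF}(\lambda):=R_\lambda^{-1}h_0/(h_0^{\sf H}R_\lambda^{-1}h_0)$. The MSE of $w$ is $J_{\rm MSE}(w):=E|w^{\sf H}y(k)-s_0(k)|^2$, and $\mathrm{MSE}(\lambda):=J_{\rm MSE}(w_{\rm RZF}(\lambda))$. *)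

(* Defs.v *)
From HB Require Import structures.
From mathcomp Require Import all_boot all_order all_algebra.
From mathcomp Require Import all_classical all_reals all_analysis.
From mathcomp Require Import complex.

Set Implicit Arguments.
Unset Strict Implicit.
Unset Printing Implicit Defensive.

Import Order.TTheory GRing.Theory Num.Theory.
Local Open Scope ring_scope.

Definition expi (R : realType) (t : R) : R[i] := (cos t +i* sin t)%C.

Definition sqmod (R : realType) (x : R[i]) : R := complex.Re x ^+ 2 + complex.Im x ^+ 2.

Definition mxH (R : realType) m n (A : 'M[R[i]]_(m, n)) : 'M[R[i]]_(n, m) :=
  (map_mx conjc A)^T.

Definition vec2 (R : realType) (a b : R[i]) : 'cV[R[i]]_(2) :=
  \col_(i < 2) (if val i == 0%N then a else b).

(* Stack x(k) := [s0(k); s1(k); n1(k); n2(k)] in C^4.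
   Its correlation matrix E[x x^H] is determined by the standing assumptions:
   E|s0|^2 = sig0^2, E|s1|^2 = sig1^2, E[s1 conj(s0)] = c1, hence E[s0 conj(s1)] = conj(c1),
   E[n n^H] = sign^2 I, noise uncorrelated with the signals. *)
Definition xcorr (R : realType) (sig0 sig1 sign : R) (c1 : R[i]) : 'M[R[i]]_(4) :=
  \matrix_(i < 4, j < 4)
    match val i, val j with
    | 0, 0 => (sig0 ^+ 2)%:C%C
    | 0, 1 => conjc c1
    | 1, 0 => c1
    | 1, 1 => (sig1 ^+ 2)%:C%C
    | 2, 2 => (sign ^+ 2)%:C%C
    | 3, 3 => (sign ^+ 2)%:C%C
    | _, _ => 0
    end.

(* y(k) = A x(k) with A = [h0 h1 I_2] *)
Definition mixmx (R : realType) (h0 h1 : 'cV[R[i]]_(2)) : 'M[R[i]]_(2, 4) :=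
  \matrix_(i < 2, j < 4)
    match val j with
    | 0 => h0 i 0
    | 1 => h1 i 0
    | 2 => if val i == 0%N then 1 else 0
    | _ => if val i == 1%N then 1 else 0
    end.

(* R = E[y y^H] = A E[x x^H] A^H *)
Definition Rcov (R : realType) (sig0 sig1 sign : R) (c1 : R[i])
  (h0 h1 : 'cV[R[i]]_(2)) : 'M[R[i]]_(2) :=
  mixmx h0 h1 *m xcorr sig0 sig1 sign c1 *m mxH (mixmx h0 h1).

(* J_MSE(w) = E|w^H y - s0|^2 = E|e^H x|^2 = e^H E[x x^H] e,
   with e := A^H w - [1;0;0;0]  (a real number; we take its real part). *)
Definition JMSE (R : realType) (sig0 sig1 sign : R) (c1 : R[i])
  (h0 h1 : 'cV[R[i]]_(2)) (w : 'cV[R[i]]_(2)) : R :=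
  let e := mxH (mixmx h0 h1) *m w - delta_mx 0 0 in
  complex.Re ((mxH e *m xcorr sig0 sig1 sign c1 *m e) 0 0).

Definition Rlam (R : realType) (sig0 sig1 sign : R) (c1 : R[i])
  (h0 h1 : 'cV[R[i]]_(2)) (lam : R) : 'M[R[i]]_(2) :=
  Rcov sig0 sig1 sign c1 h0 h1 + (lam%:C)%C *: (h1 *m mxH h1).

Definition wRZF (R : realType) (sig0 sig1 sign : R) (c1 : R[i])
  (h0 h1 : 'cV[R[i]]_(2)) (lam : R) : 'cV[R[i]]_(2) :=
  let Ri := invmx (Rlam sig0 sig1 sign c1 h0 h1 lam) in
  ((mxH h0 *m Ri *m h0) 0 0)^-1 *: (Ri *m h0).

Definition MSE (R : realType) (sig0 sig1 sign : R) (c1 : R[i])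
  (h0 h1 : 'cV[R[i]]_(2)) (lam : R) : R :=
  JMSE sig0 sig1 sign c1 h0 h1 (wRZF sig0 sig1 sign c1 h0 h1 lam).

(* Main.v *)
Require Import Defs.
From HB Require Import structures.
From mathcomp Require Import all_boot all_order all_algebra.
From mathcomp Require Import all_classical all_reals all_analysis.
From mathcomp Require Import complex.
From mathcomp Require Import ring lra.
Import Order.TTheory GRing.Theory Num.Theory numFieldNormedType.Exports.
Local Open Scope ring_scope.

Lemma ReD (R : realType) (x y : R[i]) : complex.Re (x + y) = complex.Re x + complex.Re y. Proof. by case: x => ? ?; case: y => ? ?; reflexivity. Qed.
Lemma ImD (R : realType) (x y : R[i]) : complex.Im (x + y) = complex.Im x + complex.Im y. Proof. by case: x => ? ?; case: y => ? ?; reflexivity. Qed.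
Lemma ReN (R : realType) (x : R[i]) : complex.Re (- x) = - complex.Re x. Proof. by case: x => ? ?; reflexivity. Qed.
Lemma ImN (R : realType) (x : R[i]) : complex.Im (- x) = - complex.Im x. Proof. by case: x => ? ?; reflexivity. Qed.
Lemma ReM (R : realType) (x y : R[i]) : complex.Re (x * y) = complex.Re x * complex.Re y - complex.Im x * complex.Im y. Proof. by case: x => ? ?; case: y => ? ?; reflexivity. Qed.
Lemma ImM (R : realType) (x y : R[i]) : complex.Im (x * y) = complex.Re x * complex.Im y + complex.Im x * complex.Re y. Proof. by case: x => ? ?; case: y => ? ?; reflexivity. Qed.
Lemma ReV (R : realType) (x : R[i]) : complex.Re (x^-1) = complex.Re x / (complex.Re x ^+ 2 + complex.Im x ^+ 2). Proof. by case: x => ? ?; reflexivity. Qed.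
Lemma ImV (R : realType) (x : R[i]) : complex.Im (x^-1) = - (complex.Im x / (complex.Re x ^+ 2 + complex.Im x ^+ 2)). Proof. by case: x => ? ?; reflexivity. Qed.
Lemma ReC (R : realType) (a : R) : complex.Re (a%:C)%C = a. Proof. by []. Qed.
Lemma ImC (R : realType) (a : R) : complex.Im (a%:C)%C = 0. Proof. by []. Qed.
Lemma ReJ (R : realType) (x : R[i]) : complex.Re (conjc x) = complex.Re x. Proof. by case: x => ? ?; reflexivity. Qed.
Lemma ImJ (R : realType) (x : R[i]) : complex.Im (conjc x) = - complex.Im x. Proof. by case: x => ? ?; reflexivity. Qed.
Lemma Re0 (R : realType) : complex.Re (0 : R[i]) = 0. Proof. by []. Qed.
Lemma Im0 (R : realType) : complex.Im (0 : R[i]) = 0. Proof. by []. Qed.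
Lemma Re1 (R : realType) : complex.Re (1 : R[i]) = 1. Proof. by []. Qed.
Lemma Im1 (R : realType) : complex.Im (1 : R[i]) = 0. Proof. by []. Qed.
Lemma ReB (R : realType) (x y : R[i]) : complex.Re (x - y) = complex.Re x - complex.Re y. Proof. by case: x => ? ?; case: y => ? ?; reflexivity. Qed.
Lemma ImB (R : realType) (x y : R[i]) : complex.Im (x - y) = complex.Im x - complex.Im y. Proof. by case: x => ? ?; case: y => ? ?; reflexivity. Qed.
Lemma ReCC (R : realType) (a b : R) : complex.Re (a +i* b)%C = a. Proof. by []. Qed.
Lemma ImCC (R : realType) (a b : R) : complex.Im (a +i* b)%C = b. Proof. by []. Qed.
Lemma complexP (R : realType) (x y : R[i]) : complex.Re x = complex.Re y -> complex.Im x = complex.Im y -> x = y.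
Proof. by case: x; case: y => ? ? ? ? /= -> ->. Qed.

Ltac cpx := apply: complexP; rewrite ?(ReD,ImD,ReM,ImM,ReN,ImN,ReJ,ImJ,ReB,ImB,ReC,ImC,Re0,Im0,Re1,Im1,ReCC,ImCC,ReV,ImV).
Ltac mxcomp := rewrite /Rlam /Rcov /mixmx /xcorr /mxH /vec2 !mxE !big_ord_recr !big_ord0 /= !mxE /= !big_ord_recr !big_ord0 /= !mxE /=.

Lemma det2 (R : realType) (A : 'M[R[i]]_2) : \det A = A 0 0 * A 1 1 - A 0 1 * A 1 0.
Proof.
rewrite (expand_det_row _ 0) !big_ord_recr big_ord0 /= add0r /cofactor !det_mx11 !mxE /=.
have e0: (widen_ord (leqnSn 1) ord_max : 'I_2) = 0 by apply/val_inj.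
have e1: (lift 0 0 : 'I_2) = 1 by apply/val_inj.
have e2: (lift ord_max 0 : 'I_2) = 0 by apply/val_inj.
have e3: (ord_max : 'I_2) = 1 by apply/val_inj.
rewrite e0 e1 e2 e3 expr0 expr1 mul1r mulN1r; ring.
Qed.

Lemma ord2P (i : 'I_2) : i = 0 \/ i = 1.
Proof. case: i => [[|[|k]] Hi]; [left|right|by []]; exact/val_inj. Qed.

Lemma sum2 (R : realType) (F : 'I_2 -> R[i]) : \sum_(k < 2) F k = F 0 + F 1.
Proof. by rewrite !big_ord_recr big_ord0 /= add0r; congr (F _ + F _); apply/val_inj. Qed.

Lemma cz (R : realType) : ((- 0)*i : R[i])%C = 0.
Proof. by apply/eqP; rewrite eq_complex /= oppr0 !eqxx. Qed.
Lemma c1' (R : realType) : ((1 -i* 0) : R[i])%C = 1.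
Proof. by apply/eqP; rewrite eq_complex /= oppr0 !eqxx. Qed.

Lemma wform (R : realType) (M : 'M[R[i]]_2) : \det M != 0 -> M 0 0 != 0 ->
  (let Ri := invmx M in ((mxH (vec2 0 1) *m Ri *m (vec2 0 1)) 0 0)^-1 *: (Ri *m (vec2 0 1)))
  = vec2 (- (M 0 1 / M 0 0)) 1.
Proof.
move=> dn mn /=.
have Mv : M *m vec2 (- M 0 1) (M 0 0) = \det M *: vec2 0 1.
  apply/matrixP => i j; rewrite (ord1 j) !mxE sum2 /= !mxE /= det2.
  by case: (ord2P i) => ->; rewrite /=; ring.
have Mu : M \in unitmx by rewrite unitmxE unitfE.
have Ri : invmx M *m vec2 0 1 = (\det M)^-1 *: vec2 (- M 0 1) (M 0 0).
  by rewrite -(mulKmx Mu (vec2 (- M 0 1) (M 0 0))) Mv -scalemxAr scalerA mulVf // scale1r.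
rewrite -mulmxA Ri -scalemxAr mxE.
rewrite !mxE sum2 !mxE /= cz c1' mul0r add0r mul1r scalerA.
apply/matrixP => i j; rewrite (ord1 j) !mxE.
case: (ord2P i) => -> /=; field; rewrite ?mn ?dn //=.
Qed.

Lemma M00 (R : realType) (s0 s1 sn c zr zi cr ci lam : R) :
  Rlam s0 s1 sn (cr +i* ci)%C (vec2 0 1) (vec2 (c%:C)%C (zr +i* zi)%C) lam 0 0
  = (((s1^+2 + lam) * c^+2 + sn^+2)%:C)%C.
Proof. by mxcomp; cpx; ring. Qed.
Lemma M01 (R : realType) (s0 s1 sn c zr zi cr ci lam : R) :
  Rlam s0 s1 sn (cr +i* ci)%C (vec2 0 1) (vec2 (c%:C)%C (zr +i* zi)%C) lam 0 1
  = ((c%:C)%C * (((s1^+2 + lam)%:C)%C * conjc (zr +i* zi)%C + (cr +i* ci)%C)).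
Proof. by mxcomp; cpx; ring. Qed.
Lemma M10 (R : realType) (s0 s1 sn c zr zi cr ci lam : R) :
  Rlam s0 s1 sn (cr +i* ci)%C (vec2 0 1) (vec2 (c%:C)%C (zr +i* zi)%C) lam 1 0
  = ((c%:C)%C * (((s1^+2 + lam)%:C)%C * (zr +i* zi)%C + conjc (cr +i* ci)%C)).
Proof. by mxcomp; cpx; ring. Qed.
Lemma M11 (R : realType) (s0 s1 sn c zr zi cr ci lam : R) :
  Rlam s0 s1 sn (cr +i* ci)%C (vec2 0 1) (vec2 (c%:C)%C (zr +i* zi)%C) lam 1 1
  = ((s0^+2 + (s1^+2 + lam) * (zr^+2 + zi^+2) + 2 * (cr * zr - ci * zi) + sn^+2)%:C)%C.
Proof. by mxcomp; cpx; ring. Qed.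

Definition dr (R : realType) (s0 s1 sn c zr zi cr ci lam : R) :=
  c^+2 * ((s1^+2 + lam) * s0^+2 - (cr^+2 + ci^+2)) + sn^+2 * ((s1^+2 + lam) * (c^+2 + zr^+2 + zi^+2) + s0^+2 + 2 * (cr * zr - ci * zi) + sn^+2).
Arguments dr {R}.

Lemma detRlam (R : realType) (s0 s1 sn c zr zi cr ci lam : R) :
  \det (Rlam s0 s1 sn (cr +i* ci)%C (vec2 0 1) (vec2 (c%:C)%C (zr +i* zi)%C) lam)
  = ((dr s0 s1 sn c zr zi cr ci lam)%:C)%C.
Proof. by rewrite det2 M00 M01 M10 M11 /dr; cpx; ring. Qed.

Lemma JM (R : realType) (s0 s1 sn c zr zi cr ci wr wi : R) :
  JMSE s0 s1 sn (cr +i* ci)%C (vec2 0 1) (vec2 (c%:C)%C (zr +i* zi)%C) (vec2 (wr +i* wi)%C 1)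
  = s1^+2 * ((c * wr + zr)^+2 + (c * wi - zi)^+2) + sn^+2 * (wr^+2 + wi^+2 + 1).
Proof.
rewrite /JMSE /mixmx /xcorr /mxH /vec2 !mxE !big_ord_recr !big_ord0 /= !mxE /= !big_ord_recr !big_ord0 /= !mxE /= !big_ord_recr !big_ord0 /= !mxE /=.
rewrite ?(ReD,ImD,ReM,ImM,ReN,ImN,ReJ,ImJ,ReB,ImB,ReC,ImC,Re0,Im0,Re1,Im1,ReCC,ImCC) /=.
ring.
Qed.

Lemma realC_neq0 (R : realType) (x : R) : x != 0 -> (x%:C)%C != 0 :> R[i].
Proof. by apply: contra => /eqP/complexI ->. Qed.

Lemma dr_pos (R : realType) (s0 s1 sn c zr zi cr ci lam : R) :
  0 < s0 -> 0 < sn -> 0 <= lam -> cr^+2 + ci^+2 <= (s0 * s1)^+2 ->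
  0 < dr s0 s1 sn c zr zi cr ci lam.
Proof.
move=> s0p snp l0 hQ; rewrite /dr.
set a := s1^+2 + lam.
have ha : s1^+2 <= a by rewrite /a; lra.
set P := zr^+2 + zi^+2; set Q := cr^+2 + ci^+2; set X := cr * zr - ci * zi.
have P0 : 0 <= P by rewrite /P; have := sqr_ge0 zr; have ? := sqr_ge0 zi; lra.
have CS : X^+2 <= Q * P.
  have -> : Q * P = X^+2 + (cr * zi + ci * zr)^+2 by rewrite /X /Q /P; ring.
  have ? := sqr_ge0 (cr * zi + ci * zr); lra.
have s0a : s0^+2 * s1^+2 <= s0^+2 * a by rewrite ler_pM2l // exprn_gt0.
have Qa : Q <= s0^+2 * a by rewrite /Q; rewrite exprMn in hQ; lra.
have XP : X^+2 <= s0^+2 * a * P by have ? := ler_wpM2r P0 Qa; lra.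
have aP : 0 <= a * P by apply: mulr_ge0 => //; nra.
have br : 0 <= s0^+2 + a * P + 2 * X.
  have s0g := sqr_ge0 s0.
  have y2 : 4 * (s0^+2 * a * P) <= (s0^+2 + a * P)^+2 by have ? := sqr_ge0 (s0^+2 - a * P); lra.
  nra.
have t1 : 0 <= c^+2 * (a * s0^+2 - Q) by apply: mulr_ge0; [exact: sqr_ge0 | lra].
have sn2 : 0 < sn^+2 by exact: exprn_gt0.
have ac : 0 <= a * c^+2 by apply: mulr_ge0; [nra|exact: sqr_ge0].
have : 0 < sn^+2 * (a * (c^+2 + zr^+2 + zi^+2) + s0^+2 + 2 * X + sn^+2).
  apply: mulr_gt0 => //.
  have -> : a * (c^+2 + zr^+2 + zi^+2) = a * c^+2 + a * P by rewrite /P; ring.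
  lra.
move=> ?; lra.
Qed.


Lemma wgen (R : realType) (s0 s1 sn c zr zi cr ci lam : R) :
  0 < s0 -> 0 < sn -> 0 <= lam -> cr^+2 + ci^+2 <= (s0 * s1)^+2 ->
  wRZF s0 s1 sn (cr +i* ci)%C (vec2 0 1) (vec2 (c%:C)%C (zr +i* zi)%C) lam =
  vec2 (- (((c%:C)%C * (((s1 ^+ 2 + lam)%:C)%C * (conjc (zr +i* zi)%C) + (cr +i* ci)%C))
            / ((s1 ^+ 2 + lam) * c ^+ 2 + sn ^+ 2)%:C%C)) 1.
Proof.
move=> s0p snp l0 hQ.
have Dp : 0 < (s1 ^+ 2 + lam) * c ^+ 2 + sn ^+ 2.
  have ? := exprn_gt0 2 snp; have ? : 0 <= (s1 ^+ 2 + lam) * c ^+ 2.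
    by apply: mulr_ge0; [have ? := sqr_ge0 s1; lra | exact: sqr_ge0].
  lra.
have H1 : \det (Rlam s0 s1 sn (cr +i* ci)%C (vec2 0 1) (vec2 (c%:C)%C (zr +i* zi)%C) lam) != 0.
  by rewrite detRlam realC_neq0 // gt_eqF // dr_pos.
have H2 : Rlam s0 s1 sn (cr +i* ci)%C (vec2 0 1) (vec2 (c%:C)%C (zr +i* zi)%C) lam 0 0 != 0.
  by rewrite M00 realC_neq0 // gt_eqF.
have W := @wform _ _ H1 H2.
rewrite M01 M00 in W.
exact: W.
Qed.

Lemma msegen (R : realType) (s0 s1 sn c zr zi cr ci lam : R) :
  0 < s0 -> 0 < sn -> 0 <= lam -> cr^+2 + ci^+2 <= (s0 * s1)^+2 ->
  let a : R := s1 ^+ 2 + lam in let D : R := a * c ^+ 2 + sn ^+ 2 in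
  let wr : R := - (c * (a * zr + cr)) / D in let wi : R := - (c * (ci - a * zi)) / D in
  MSE s0 s1 sn (cr +i* ci)%C (vec2 0 1) (vec2 (c%:C)%C (zr +i* zi)%C) lam =
  s1^+2 * ((c * wr + zr)^+2 + (c * wi - zi)^+2) + sn^+2 * (wr^+2 + wi^+2 + 1).
Proof.
move=> s0p snp l0 hQ a D wr wi.
have Dp : 0 < D.
  have ? := exprn_gt0 2 snp; have ? : 0 <= a * c ^+ 2.
    by apply: mulr_ge0; [have ? := sqr_ge0 s1; rewrite /a; lra | exact: sqr_ge0].
  rewrite /D; lra.
rewrite /MSE wgen //.
have -> : - (((c%:C)%C * (((s1 ^+ 2 + lam)%:C)%C * (conjc (zr +i* zi)%C) + (cr +i* ci)%C))
            / ((s1 ^+ 2 + lam) * c ^+ 2 + sn ^+ 2)%:C%C) = (wr +i* wi)%C.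
  rewrite -fmorphV; cpx; rewrite /wr /wi /D /a; field; rewrite -/a -/D gt_eqF //.
by rewrite JM.
Qed.

Definition wrD (R : realType) (s1 sn c zr cr lam : R) : R :=
  - (c * ((s1 ^+ 2 + lam) * zr + cr)) / ((s1 ^+ 2 + lam) * c ^+ 2 + sn ^+ 2).
Definition wiD (R : realType) (s1 sn c zi ci lam : R) : R :=
  - (c * (ci - (s1 ^+ 2 + lam) * zi)) / ((s1 ^+ 2 + lam) * c ^+ 2 + sn ^+ 2).
Arguments wrD {R}. Arguments wiD {R}.

Lemma msegen' (R : realType) (s0 s1 sn c zr zi cr ci lam : R) :
  0 < s0 -> 0 < sn -> 0 <= lam -> cr^+2 + ci^+2 <= (s0 * s1)^+2 ->
  MSE s0 s1 sn (cr +i* ci)%C (vec2 0 1) (vec2 (c%:C)%C (zr +i* zi)%C) lam =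
  s1^+2 * ((c * wrD s1 sn c zr cr lam + zr)^+2 + (c * wiD s1 sn c zi ci lam - zi)^+2)
  + sn^+2 * (wrD s1 sn c zr cr lam ^+2 + wiD s1 sn c zi ci lam ^+2 + 1).
Proof. move=> *; exact: msegen. Qed.

Local Open Scope classical_set_scope.

Lemma uprops (R : realType) (g0 c2 x : R) : 0 < g0 -> 0 < c2 -> 0 <= x ->
  0 < (x * c2 + g0)^-1 /\ (x * c2 + g0)^-1 * (x * c2 + g0) = 1.
Proof.
move=> g0p c2p x0; have gp : 0 < x * c2 + g0 by have H := mulr_ge0 x0 (ltW c2p); lra.
split; [by rewrite invr_gt0 | by rewrite mulVf // gt_eqF].
Qed.
Arguments uprops {R g0 c2 x}.

Lemma ana1 (R : realType) (f : R -> R) (D2 g0 c2 gam C : R) :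
  0 < D2 -> 0 < g0 -> 0 < c2 ->
  (forall x : R, 0 <= x -> f x = D2 * (g0 * (x * c2 + g0)^-1 ^+ 2 - 2 * gam * (x * c2 + g0)^-1) + C) ->
  gam <= 0 ->
  (forall a b : R, 0 <= a -> a < b -> f b < f a) /\
  exists L : R, (f x @[x --> +oo%R] --> L) /\ inf [set f x | x in [set x : R | 0 <= x]] = L.
Proof.
move=> D2p g0p c2p fE gn; split.
  move=> a b a0 ab; have b0 : 0 <= b by lra.
  rewrite (fE a a0) (fE b b0).
  have [up uE] := uprops g0p c2p a0; have [vp vE] := uprops g0p c2p b0.
  set u := (a * c2 + g0)^-1 in up uE *; set v := (b * c2 + g0)^-1 in vp vE *.
  have vu : v < u.
    have ga : 0 < a * c2 + g0 by have H := mulr_ge0 a0 (ltW c2p); lra.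
    have gb : 0 < b * c2 + g0 by have H := mulr_ge0 b0 (ltW c2p); lra.
    rewrite /u /v ltf_pV2 ?posrE //; have H := ltr_pM2r c2p; have H2 : a * c2 < b * c2 by rewrite H.
    lra.
  have h : 0 < (u - v) * (g0 * (u + v) - 2 * gam) by apply: mulr_gt0; nra.
  have h2 := mulr_gt0 D2p h.
  nra.
have flim : f x @[x --> +oo%R] --> C.
  apply/cvgrPdist_lt => e e0.
  set K := D2 * (1 + 2 * `|gam|) / e.
  have ng := normr_ge0 gam.
  have Kp : 0 < K by rewrite /K divr_gt0 // mulr_gt0 //; lra.
  near=> x.
  have x0 : 0 <= x by near: x; apply: nbhs_pinfty_ge; rewrite num_real.
  have xK : K / c2 < x by near: x; apply: nbhs_pinfty_gt; rewrite num_real.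
  rewrite (fE x x0).
  have [up uE] := uprops g0p c2p x0.
  set u := (x * c2 + g0)^-1 in up uE *.
  have xK' : K < x * c2 by rewrite -ltr_pdivrMr.
  have uK : u * K < 1 by nra.
  have ug : u * g0 <= 1 by nra.
  have eK : K * e = D2 * (1 + 2 * `|gam|) by rewrite /K mulrVK // unitfE gt_eqF.
  have gl : gam <= `|gam| := ler_norm gam.
  have gl2 : - `|gam| <= gam by rewrite lerNl -normrN ler_norm.
  have h1 : g0 * u ^+ 2 <= u by rewrite expr2; nra.
  have h2 : 0 <= g0 * u ^+ 2 by rewrite expr2; nra.
  have h3 : gam * u <= `|gam| * u by rewrite ler_pM2r.
  have h3' : - `|gam| * u <= gam * u by rewrite ler_pM2r.
  have h4 : u * (D2 * (1 + 2 * `|gam|)) < e.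
    rewrite -eK mulrA; have := uK; rewrite -(ltr_pM2r e0) mul1r; exact.
  set Y := g0 * u ^+ 2 - 2 * gam * u.
  have hY1 : Y <= u * (1 + 2 * `|gam|) by rewrite /Y; lra.
  have hY2 : - (u * (1 + 2 * `|gam|)) <= Y by rewrite /Y; lra.
  have hD1 : D2 * Y <= D2 * (u * (1 + 2 * `|gam|)) by rewrite ler_pM2l.
  have hD2 : D2 * (- (u * (1 + 2 * `|gam|))) <= D2 * Y by rewrite ler_pM2l.
  have -> : C - (D2 * Y + C) = - (D2 * Y) by ring.
  rewrite normrN ltr_norml; apply/andP; split; nra.
exists C; split => //.
set S := [set f x | x in [set x : R | 0 <= x]].
have fgt : forall x : R, 0 <= x -> C < f x.
  move=> x x0; rewrite (fE x x0).
  have [up uE] := uprops g0p c2p x0.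
  set u := (x * c2 + g0)^-1 in up uE *.
  have h : 0 < u * (g0 * u - 2 * gam) by apply: mulr_gt0 => //; have H := mulr_gt0 g0p up; lra.
  have h2 := mulr_gt0 D2p h.
  have -> : g0 * u ^+ 2 - 2 * gam * u = u * (g0 * u - 2 * gam) by ring.
  lra.
have lbS : lbound S C by move=> _ [x x0 <-]; apply/ltW/fgt.
have neS : S !=set0 by exists (f 0); exists 0 => //; rewrite /mkset lexx.
apply: le_anti; apply/andP; split; last exact: lb_le_inf neS lbS.
apply/ler_addgt0Pr => e e0.
have H1 : \forall t \near +oo%R, `|C - f t| < e by apply: (proj1 (cvgrPdist_lt _ _) flim); exact: e0.
have H2 : \forall x \near +oo%R, (0:R) <= x by apply: nbhs_pinfty_ge; rewrite num_real.
have [x [x0 hx]] : exists x : R, 0 <= x /\ `|C - f x| < e.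
  have H3 : \forall x \near +oo%R, ((fun x : R => 0 <= x) `&` (fun t : R => `|C - f t| < e)) x by apply: filterI.
  have [x [? ?]] := filter_ex H3.
  by exists x.
have Sx : S (f x) by exists x.
have := ge_inf (ex_intro _ C lbS) Sx.
rewrite ltr_norml in hx; case/andP: hx => hx1 hx2.
lra.
Unshelve. all: by end_near.
Qed.

Lemma ana2 (R : realType) (f : R -> R) (D2 g0 c2 gam C : R) :
  0 < D2 -> 0 < g0 -> 0 < c2 ->
  (forall x : R, 0 <= x -> f x = D2 * (g0 * (x * c2 + g0)^-1 ^+ 2 - 2 * gam * (x * c2 + g0)^-1) + C) ->
  1 <= gam ->
  (forall a b : R, 0 <= a -> a < b -> f a < f b) /\
  (forall lam : R, 0 <= lam -> f 0 <= f lam).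
Proof.
move=> D2p g0p c2p fE g1.
have inc : forall a b : R, 0 <= a -> a < b -> f a < f b.
  move=> a b a0 ab; have b0 : 0 <= b by lra.
  rewrite (fE a a0) (fE b b0).
  have [up uE] := uprops g0p c2p a0; have [vp vE] := uprops g0p c2p b0.
  have ga : 0 < a * c2 + g0 by have H := mulr_ge0 a0 (ltW c2p); lra.
  have gb : 0 < b * c2 + g0 by have H := mulr_ge0 b0 (ltW c2p); lra.
  have H := ltr_pM2r c2p; have H2 : a * c2 < b * c2 by rewrite H.
  have H3 := mulr_ge0 a0 (ltW c2p).
  set u := (a * c2 + g0)^-1 in up uE *; set v := (b * c2 + g0)^-1 in vp vE *.
  have vu : v < u by rewrite /u /v ltf_pV2 ?posrE //; lra.
  have ug : u * g0 <= 1 by nra.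
  have vg : v * g0 < 1 by nra.
  have h : 0 < (u - v) * (2 * gam - g0 * (u + v)) by apply: mulr_gt0; nra.
  have h2 := mulr_gt0 D2p h.
  nra.
split => // lam l0.
case: (ltrgtP lam 0) => [l|l|->]; [lra| |by []].
by apply/ltW/inc.
Qed.

Lemma ana3 (R : realType) (f : R -> R) (D2 g0 c2 gam C : R) :
  0 < D2 -> 0 < g0 -> 0 < c2 ->
  (forall x : R, 0 <= x -> f x = D2 * (g0 * (x * c2 + g0)^-1 ^+ 2 - 2 * gam * (x * c2 + g0)^-1) + C) ->
  0 < gam < 1 ->
  let lamstar : R := g0 / c2 * ((1 - gam) / gam) in
  0 < lamstar /\ (forall lam : R, 0 <= lam -> f lamstar <= f lam).
Proof.
move=> D2p g0p c2p fE /andP[g0' g1] lamstar.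
have lp : 0 < lamstar by rewrite /lamstar mulr_gt0 // divr_gt0 //; lra.
split => // lam l0.
have gs : lamstar * c2 + g0 = g0 / gam.
  rewrite /lamstar; field; rewrite ?gt_eqF //.
rewrite (fE lamstar (ltW lp)) (fE lam l0) gs invf_div.
have [up uE] := uprops g0p c2p l0.
set u := (lam * c2 + g0)^-1 in up uE *.
rewrite -subr_ge0.
have -> : D2 * (g0 * u ^+ 2 - 2 * gam * u) + C - (D2 * (g0 * (gam / g0) ^+ 2 - 2 * gam * (gam / g0)) + C)
   = D2 * g0 * (u - gam / g0) ^+ 2 by field; rewrite gt_eqF.
by rewrite mulr_ge0 ?sqr_ge0 // mulr_ge0 // ltW.
Qed.


Lemma real_id (R : realType) (s c sn s1 lam r q zr zi cr ci t : R) :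
  c != 0 -> (s1 ^+ 2 + lam) * c ^+ 2 + sn ^+ 2 != 0 ->
  zr^+2 + zi^+2 = s^+2 -> cr^+2 + ci^+2 = r^+2 -> cr * zr - ci * zi = s * r * q -> t = s / c ->
  s1^+2 * ((c * wrD s1 sn c zr cr lam + zr)^+2 + (c * wiD s1 sn c zi ci lam - zi)^+2)
  + sn^+2 * (wrD s1 sn c zr cr lam ^+2 + wiD s1 sn c zi ci lam ^+2 + 1)
  = (sn^+4 * t^+2 - 2 * sn^+2 * t * r * c * q + r^+2 * c^+2) * (s1 ^+ 2 * c ^+ 2 + sn ^+ 2)
      / (lam * c ^+ 2 + s1 ^+ 2 * c ^+ 2 + sn ^+ 2) ^+ 2
    - 2 * sn ^+ 2 * (sn^+2 * t - r * c * q) * t / (lam * c ^+ 2 + s1 ^+ 2 * c ^+ 2 + sn ^+ 2)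
    + sn ^+ 2 * (t ^+ 2 + 1).
Proof.
move=> c0 D0 hP hQ hX ->.
have -> : lam * c ^+ 2 + s1 ^+ 2 * c ^+ 2 + sn ^+ 2 = (s1 ^+ 2 + lam) * c ^+ 2 + sn ^+ 2 by ring.
set D := (s1 ^+ 2 + lam) * c ^+ 2 + sn ^+ 2 in D0 *.
rewrite /wrD /wiD -/D.
have -> : s1^+2 * ((c * (- (c * ((s1 ^+ 2 + lam) * zr + cr)) / D) + zr)^+2 + (c * (- (c * (ci - (s1 ^+ 2 + lam) * zi)) / D) - zi)^+2)
  + sn^+2 * ((- (c * ((s1 ^+ 2 + lam) * zr + cr)) / D) ^+2 + (- (c * (ci - (s1 ^+ 2 + lam) * zi)) / D) ^+2 + 1)
  = (s1^+2 * (sn^+4 * (zr^+2 + zi^+2) - 2 * sn^+2 * c^+2 * (cr * zr - ci * zi) + c^+4 * (cr^+2 + ci^+2))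
     + sn^+2 * c^+2 * ((s1 ^+ 2 + lam)^+2 * (zr^+2 + zi^+2) + 2 * (s1 ^+ 2 + lam) * (cr * zr - ci * zi) + (cr^+2 + ci^+2))) / D^+2 + sn^+2.
  rewrite /D; field; exact: D0.
rewrite hP hQ hX /D; field.
by rewrite c0 D0.
Qed.

Theorem lemma3 (R : realType) (tau phiz sig0 sig1 sign r phic : R) :
  0 <= tau < pi / 2 -> 0 <= phiz < 2 * pi ->
  0 < sig0 -> 0 < sig1 -> 0 < sign ->
  0 <= r <= sig0 * sig1 -> 0 <= phic < 2 * pi ->
  let z : R[i] := ((sin tau)%:C * expi phiz)%C in
  let c1 : R[i] := (r%:C * expi phic)%C in
  let h0 : 'cV[R[i]]_(2) := vec2 0 1 in
  let h1 : 'cV[R[i]]_(2) := vec2 ((cos tau)%:C)%C z in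
  let w := wRZF sig0 sig1 sign c1 h0 h1 in
  let mse := MSE sig0 sig1 sign c1 h0 h1 in
  let g := fun lam : R => lam * cos tau ^+ 2 + sig1 ^+ 2 * cos tau ^+ 2 + sign ^+ 2 in
  let delta1 : R := sign ^+ 2 * tan tau - r * cos tau * cos (phic + phiz) in
  let delta2 : R[i] :=
    ((sign ^+ 2 * tan tau)%:C - (r * cos tau)%:C * expi (phic + phiz))%C in
  let gam : R := delta1 * sign ^+ 2 * tan tau / sqmod delta2 in
  (forall lam : R, 0 <= lam ->
     w lam = vec2
       (- (((cos tau)%:C * ((sig1 ^+ 2 + lam)%:C * conjc z + c1))
            / ((sig1 ^+ 2 + lam) * cos tau ^+ 2 + sign ^+ 2)%:C))%C
       1) /\
  (forall lam : R, 0 <= lam ->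
     mse lam = sqmod delta2 * (sig1 ^+ 2 * cos tau ^+ 2 + sign ^+ 2) / g lam ^+ 2
               - 2 * sign ^+ 2 * delta1 * tan tau / g lam
               + sign ^+ 2 * (tan tau ^+ 2 + 1)) /\
  (delta2 = 0 ->
     delta1 = 0 /\
     forall lam : R, 0 <= lam -> mse lam = sign ^+ 2 * (tan tau ^+ 2 + 1)) /\
  (delta2 != 0 ->
     ((gam <= 0) = (delta1 * tan tau <= 0)) /\
     (gam <= 0 ->
        (forall a b : R, 0 <= a -> a < b -> mse b < mse a) /\
        exists L : R, (mse x @[x --> +oo%R] --> L) /\
                      inf [set mse x | x in [set x : R | 0 <= x]] = L) /\
     (1 <= gam ->
        (forall a b : R, 0 <= a -> a < b -> mse a < mse b) /\
        (forall lam : R, 0 <= lam -> mse 0 <= mse lam)) /\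
     (0 < gam < 1 ->
        let lamstar : R :=
          (sig1 ^+ 2 * cos tau ^+ 2 + sign ^+ 2) / cos tau ^+ 2 * ((1 - gam) / gam) in
        0 < lamstar /\ (forall lam : R, 0 <= lam -> mse lamstar <= mse lam))).
Proof.
move=> /andP[t0 tpi] _ s0p s1p snp /andP[r0 rs] _ z c1 h0 h1 w mse g delta1 delta2 gam.
have pip := @pi_gt0 R.
have cp : 0 < cos tau by apply: cos_gt0_pihalf; apply/andP; split; lra.
have c0 : cos tau != 0 by rewrite gt_eqF.
set zr : R := sin tau * cos phiz; set zi : R := sin tau * sin phiz.
set cr : R := r * cos phic; set ci : R := r * sin phic.
have hz : z = (zr +i* zi)%C by rewrite /z /expi; cpx; rewrite /zr /zi; ring.
have hc1 : c1 = (cr +i* ci)%C by rewrite /c1 /expi; cpx; rewrite /cr /ci; ring.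
have hQ0 : cr^+2 + ci^+2 = r^+2.
  rewrite /cr /ci; have := cos2Dsin2 phic => E.
  by rewrite !exprMn -mulrDr E mulr1.
have hQ : cr^+2 + ci^+2 <= (sig0 * sig1)^+2.
  rewrite hQ0 !expr2; nra.
have hP : zr^+2 + zi^+2 = sin tau ^+2.
  rewrite /zr /zi; have := cos2Dsin2 phiz => E.
  by rewrite !exprMn -mulrDr E mulr1.
have hX : cr * zr - ci * zi = sin tau * r * cos (phic + phiz).
  by rewrite /cr /ci /zr /zi cosD; ring.
set dre : R := sign ^+ 2 * tan tau - r * cos tau * cos (phic + phiz).
set dim : R := - (r * cos tau * sin (phic + phiz)).
have Ddelta2 : delta2 = (dre +i* dim)%C.
  by rewrite /delta2 /expi; cpx; rewrite /dre /dim; ring.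
have sq2 : sqmod delta2 = sign^+4 * tan tau^+2 - 2 * sign^+2 * tan tau * r * cos tau * cos (phic + phiz)
                         + r^+2 * cos tau^+2.
  rewrite /sqmod Ddelta2 ReCC ImCC /dre /dim sqrrN exprMn sin2cos2; ring.
have part1 : forall lam : R, 0 <= lam ->
     w lam = vec2
       (- (((cos tau)%:C * ((sig1 ^+ 2 + lam)%:C * conjc z + c1))
            / ((sig1 ^+ 2 + lam) * cos tau ^+ 2 + sign ^+ 2)%:C))%C
       1.
  move=> lam l0; rewrite /w /h0 /h1 hz hc1; exact: wgen.
have part2 : forall lam : R, 0 <= lam ->
     mse lam = sqmod delta2 * (sig1 ^+ 2 * cos tau ^+ 2 + sign ^+ 2) / g lam ^+ 2
               - 2 * sign ^+ 2 * delta1 * tan tau / g lam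
               + sign ^+ 2 * (tan tau ^+ 2 + 1).
  move=> lam l0; rewrite /mse /h0 /h1 hz hc1 msegen' // sq2 /g /delta1.
  have D0 : (sig1 ^+ 2 + lam) * cos tau ^+ 2 + sign ^+ 2 != 0.
    rewrite gt_eqF //; have ? := exprn_gt0 2 snp.
    have ? : 0 <= (sig1 ^+ 2 + lam) * cos tau ^+ 2.
      by apply: mulr_ge0; [have ? := sqr_ge0 sig1; lra | exact: sqr_ge0].
    lra.
  rewrite /dre (@real_id R (sin tau) (cos tau) sign sig1 lam r (cos (phic + phiz)) zr zi cr ci (tan tau) c0 D0 hP hQ0 hX) //.
split; first exact: part1.
split; first exact: part2.
have d1E : delta1 = dre by [].
split.
  move=> d20.
  have hre : dre = 0 by have := congr1 (@complex.Re R) d20; rewrite Ddelta2 ReCC Re0.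
  have hsq : sqmod delta2 = 0 by rewrite /sqmod d20 Re0 Im0 expr2 mul0r addr0.
  split; first by rewrite d1E.
  move=> lam l0; rewrite part2 // hsq d1E hre.
  by rewrite !(mul0r, mulr0, subr0, add0r, oppr0).
move=> d2n.
have sqE : sqmod delta2 = dre^+2 + dim^+2 by rewrite /sqmod Ddelta2 ReCC ImCC.
have D2p : 0 < sqmod delta2.
  rewrite sqE.
  have ? := sqr_ge0 dre; have ? := sqr_ge0 dim.
  case: (ltrgtP (dre^+2 + dim^+2) 0) => [h|//|h]; first lra.
  exfalso; move/negP: d2n; apply; apply/eqP; rewrite Ddelta2.
  have e1 : dre = 0 by apply/eqP; rewrite -sqrf_eq0 eq_le sqr_ge0 andbT; lra.
  have e2 : dim = 0 by apply/eqP; rewrite -sqrf_eq0 eq_le sqr_ge0 andbT; lra.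
  by apply: complexP; rewrite ?ReCC ?ImCC ?Re0 ?Im0.
have c2p : 0 < cos tau ^+ 2 by exact: exprn_gt0.
have g0p : 0 < sig1 ^+ 2 * cos tau ^+ 2 + sign ^+ 2.
  have ? := exprn_gt0 2 snp; have ? := mulr_ge0 (sqr_ge0 sig1) (ltW c2p); lra.
have fE : forall x : R, 0 <= x -> mse x = sqmod delta2 *
    ((sig1 ^+ 2 * cos tau ^+ 2 + sign ^+ 2) * (x * cos tau ^+ 2 + (sig1 ^+ 2 * cos tau ^+ 2 + sign ^+ 2))^-1 ^+ 2
     - 2 * gam * (x * cos tau ^+ 2 + (sig1 ^+ 2 * cos tau ^+ 2 + sign ^+ 2))^-1) + sign ^+ 2 * (tan tau ^+ 2 + 1).
  move=> x x0; rewrite part2 // /g /gam.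
  have gx : x * cos tau ^+ 2 + (sig1 ^+ 2 * cos tau ^+ 2 + sign ^+ 2) != 0.
    by rewrite gt_eqF //; have ? := mulr_ge0 x0 (ltW c2p); lra.
  have gx' : x * cos tau ^+ 2 + sig1 ^+ 2 * cos tau ^+ 2 + sign ^+ 2 != 0 by rewrite -addrA.
  field; rewrite exprMn gx gt_eqF //.
split.
  rewrite /gam.
  have -> : delta1 * sign ^+ 2 * tan tau / sqmod delta2 = (delta1 * tan tau) * (sign ^+ 2 / sqmod delta2) by ring.
  by rewrite pmulr_lle0 // divr_gt0 // exprn_gt0.
split; first by move=> gn; exact: (@ana1 R mse (sqmod delta2) _ (cos tau ^+ 2) gam _ D2p g0p c2p fE gn).
split; first by move=> g1; exact: (@ana2 R mse (sqmod delta2) _ (cos tau ^+ 2) gam _ D2p g0p c2p fE g1).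
by move=> gb; exact: (@ana3 R mse (sqmod delta2) _ (cos tau ^+ 2) gam _ D2p g0p c2p fE gb).
Qed.
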